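(* Let $d\ge 2$. There exist constants $C>1$ and $c\in(0,1)$ depending only on $d$ such that the following holds for every finite field $\mathbb F_q$ of characteristic greater than two. Let $P=\{x\in\mathbb F_q^d: x_1^2+\cdots+x_{d-1}^2=x_d\}$ and $E,F\subset P$. If $|E||F|\ge Cq^d$, then $|\Pi(E,F)|\ge c\,q$.
   Context: $\mathbb F_q$ is a finite field with $q$ elements and characteristic greater than two. For $E,F\subset\mathbb F_q^d$, $\Pi(E,F)=\{x\cdot y: x\in E,\ y\in F\}$ with $x\cdot y=\sum_i x_iy_i$. *)

(* Defs.v *)
From HB Require Import structures.
From mathcomp Require Import all_boot all_order all_algebra all_field.
Set Implicit Arguments. Unset Strict Implicit. Unset Printing Implicit Defensive.
Import Order.TTheory GRing.Theory Num.Theory.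
Local Open Scope ring_scope.

(* Vectors of F_q^d are row vectors 'rV[K]_d; we work with d = n.+1. *)

Definition dotF (K : finFieldType) (d : nat) (x y : 'rV[K]_d) : K :=
  \sum_(i < d) x 0 i * y 0 i.

(* Paraboloid in F_q^(n+1): x_1^2 + ... + x_n^2 = x_(n+1)
   (the first n coordinates are i < n, the last one is ord_max). *)
Definition paraboloid (K : finFieldType) (n : nat) : {set 'rV[K]_n.+1} :=
  [set x : 'rV[K]_n.+1 |
     \sum_(i < n) x 0 (widen_ord (leqnSn n) i) ^+ 2 == x 0 ord_max].

Definition dotset (K : finFieldType) (d : nat) (E F : {set 'rV[K]_d}) : {set K} :=
  [set dotF x y | x in E, y in F].

(* Main.v *)
Require Import Defs.
From HB Require Import structures.
From mathcomp Require Import all_boot all_order all_algebra all_field ring.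
Import Order.TTheory GRing.Theory Num.Theory.
Local Open Scope ring_scope.
Set Implicit Arguments. Unset Strict Implicit.

Lemma dotDl (K : finFieldType) d (x y w : 'rV[K]_d) (k : K) :
  dotF (x + k *: y) w = dotF x w + k * dotF y w.
Proof.
rewrite /dotF mulr_sumr -big_split /=; apply: eq_bigr => i _.
by rewrite !mxE mulrDl mulrA.
Qed.

Lemma dotBr (K : finFieldType) d (x y y' : 'rV[K]_d) :
  dotF x (y - y') = dotF x y - dotF x y'.
Proof.
rewrite /dotF -sumrB; apply: eq_bigr => i _.
by rewrite !mxE mulrBr.
Qed.

Lemma dotZl (K : finFieldType) d (x w : 'rV[K]_d) (k : K) :
  dotF (k *: x) w = k * dotF x w.
Proof.
rewrite /dotF mulr_sumr; apply: eq_bigr => i _.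
by rewrite !mxE mulrA.
Qed.

Lemma sum_eq1 (T : finType) (a : T) :
  \sum_(t : T) ((a == t)%:R : rat) = 1.
Proof.
rewrite (bigD1 a) //= eqxx big1 ?addr0 // => t /negbTE.
by rewrite eq_sym => ->.
Qed.

Lemma level_sum (K : finFieldType) d (G : {set 'rV[K]_d}) (w v : 'rV[K]_d) :
  dotF v w = 1 -> (forall x k, x \in G -> x + k *: v \in G) ->
  forall c, \sum_(x in G) ((dotF x w == c)%:R : rat) =
            \sum_(x in G) ((dotF x w == 0)%:R : rat).
Proof.
move=> hv hG c.
rewrite (reindex_inj (h := fun x => x + c *: v)); last first.
  by move=> x y /= /addIr.
apply: eq_big => x /=.
  apply/idP/idP => [/(hG _ (- c))|/(hG _ c)] //.
  by rewrite -addrA -scalerDl addrN scale0r addr0.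
by move=> _; rewrite dotDl hv mulr1 -{2}(add0r c) (inj_eq (addIr c)).
Qed.

Lemma level_card (K : finFieldType) d (G : {set 'rV[K]_d}) (w v : 'rV[K]_d) :
  dotF v w = 1 -> (forall x k, x \in G -> x + k *: v \in G) ->
  (#|K|%:R * \sum_(x in G) ((dotF x w == 0)%:R : rat)) = #|G|%:R.
Proof.
move=> hv hG.
have -> : (#|G|%:R : rat) = \sum_(c : K) \sum_(x in G) ((dotF x w == c)%:R : rat).
  rewrite exchange_big /= -sumr_const; apply: eq_bigr => x _.
  by rewrite sum_eq1.
transitivity (\sum_(c : K) \sum_(x in G) ((dotF x w == 0)%:R : rat)).
  by rewrite sumr_const mulr_natl.
by apply: eq_bigr => c _; rewrite (level_sum hv hG c).
Qed.

Lemma qnz (K : finFieldType) : (#|K|%:R : rat) != 0.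
Proof. by rewrite pnatr_eq0 -lt0n ltnW // card_finNzRing_gt1. Qed.

Definition mcnt (K : finFieldType) d (F : {set 'rV[K]_d}) (x : 'rV[K]_d) (t : K) : rat :=
  \sum_(y in F) ((dotF x y == t)%:R).

Definition Wf (K : finFieldType) d (F : {set 'rV[K]_d}) (x : 'rV[K]_d) : rat :=
  \sum_(t : K) ((#|K|%:R * mcnt F x t - #|F|%:R) ^+ 2).

Lemma Wf_ge0 (K : finFieldType) d (F : {set 'rV[K]_d}) x : 0 <= Wf F x.
Proof. by apply: sumr_ge0 => t _; apply: sqr_ge0. Qed.

Lemma mcnt_sum (K : finFieldType) d (F : {set 'rV[K]_d}) x :
  \sum_(t : K) mcnt F x t = #|F|%:R.
Proof.
rewrite /mcnt exchange_big /= -sumr_const; apply: eq_bigr => y _.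
by rewrite sum_eq1.
Qed.

Lemma mcnt_sq (K : finFieldType) d (F : {set 'rV[K]_d}) x :
  \sum_(t : K) mcnt F x t ^+ 2 =
  \sum_(y in F) \sum_(y' in F) ((dotF x y == dotF x y')%:R : rat).
Proof.
rewrite /mcnt.
under eq_bigr do rewrite expr2 mulr_suml.
rewrite exchange_big /=; apply: eq_bigr => y _.
under eq_bigr do rewrite mulr_sumr.
rewrite exchange_big /=; apply: eq_bigr => y' _.
rewrite (bigD1 (dotF x y)) //= eqxx mul1r big1 ?addr0 1?eq_sym //.
by move=> t /negbTE; rewrite eq_sym => ->; rewrite mul0r.
Qed.

Lemma Wf_expand (K : finFieldType) d (F : {set 'rV[K]_d}) x :
  Wf F x = #|K|%:R ^+ 2 * (\sum_(y in F) \sum_(y' in F) ((dotF x y == dotF x y')%:R : rat))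
           - #|K|%:R * #|F|%:R ^+ 2.
Proof.
rewrite /Wf -mcnt_sq.
have -> : \sum_(t : K) ((#|K|%:R * mcnt F x t - #|F|%:R) ^+ 2) =
   \sum_(t : K) (#|K|%:R ^+ 2 * mcnt F x t ^+ 2) -
   \sum_(t : K) (2 * #|K|%:R * #|F|%:R * mcnt F x t) +
   \sum_(t : K) (#|F|%:R ^+ 2 : rat).
  rewrite -sumrB -big_split /=; apply: eq_bigr => t _.
  by rewrite sqrrB exprMn; ring.
rewrite -mulr_sumr -mulr_sumr mcnt_sum sumr_const.
rewrite -[_ *+ #|K|]mulr_natl; ring.
Qed.

Lemma pair_term (K : finFieldType) d (G : {set 'rV[K]_d}) y y' :
  (y != y' -> exists v, dotF v (y - y') = 1 /\
      forall x k, x \in G -> x + k *: v \in G) ->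
  #|K|%:R * \sum_(x in G) ((dotF x y == dotF x y')%:R : rat) =
  #|G|%:R + (#|K|%:R - 1) * #|G|%:R * (y == y')%:R.
Proof.
case: eqP => [<- _|/eqP ne [//|v [hv hG]]].
  rewrite mulr1 (eq_bigr (fun _ => 1)); last by move=> x _; rewrite eqxx.
  by rewrite sumr_const -mulr_natr; ring.
rewrite mulr0 addr0 -(level_card hv hG); congr (_ * _).
by apply: eq_bigr => x _; rewrite dotBr subr_eq0.
Qed.

Lemma Wsum_G (K : finFieldType) d (F G : {set 'rV[K]_d}) :
  (forall y y', y \in F -> y' \in F -> y != y' -> exists v, dotF v (y - y') = 1 /\
      forall x k, x \in G -> x + k *: v \in G) ->
  \sum_(x in G) Wf F x = #|G|%:R * (#|K|%:R ^+ 2 - #|K|%:R) * #|F|%:R.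
Proof.
move=> hF.
under eq_bigr do rewrite Wf_expand.
rewrite sumrB -mulr_sumr sumr_const.
rewrite exchange_big /=.
under eq_bigr do rewrite exchange_big /=.
have -> : \sum_(y in F) \sum_(y' in F) \sum_(x in G) ((dotF x y == dotF x y')%:R : rat)
   = #|K|%:R^-1 * \sum_(y in F) \sum_(y' in F)
       (#|G|%:R + (#|K|%:R - 1) * #|G|%:R * (y == y')%:R).
  rewrite mulr_sumr; apply: eq_bigr => y hy; rewrite mulr_sumr.
  apply: eq_bigr => y' hy'; rewrite -pair_term; last exact: hF y y' hy hy'.
  rewrite mulrA mulVf ?mul1r // pnatr_eq0 -lt0n; apply/card_gt0P; by exists 0.
have h1 : forall y, y \in F -> \sum_(y' in F) ((y == y')%:R : rat) = 1.
  move=> z hz; rewrite (bigD1 z) //= eqxx big1 ?addr0 // => z' /andP [_].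
  by rewrite eq_sym => /negbTE ->.
have -> : \sum_(y in F) \sum_(y' in F)
   ((#|G|%:R : rat) + (#|K|%:R - 1) * #|G|%:R * (y == y')%:R) =
   \sum_(y in F) ((#|G|%:R : rat) * #|F|%:R + (#|K|%:R - 1) * #|G|%:R).
  apply: eq_bigr => y hy.
  by rewrite big_split /= sumr_const -mulr_sumr h1 // mulr1 -[_ *+ #|F|]mulr_natr.
rewrite sumr_const -[_ *+ #|F|]mulr_natr -[_ *+ #|G|]mulr_natr.
have hq : (#|K|%:R : rat) != 0.
  exact: qnz.
rewrite -[_ * _ ^+ 2 *+ #|G|]mulr_natr.
field.
exact: hq.
Qed.

Lemma mcnt_scale (K : finFieldType) d (F : {set 'rV[K]_d}) x (l : K) t :
  l != 0 -> mcnt F (l *: x) t = mcnt F x (t / l).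
Proof.
move=> hl; rewrite /mcnt; apply: eq_bigr => y _; rewrite dotZl.
have -> : (l * dotF x y == t) = (l * dotF x y == l * (t / l)).
  by rewrite [l * (t / l)]mulrC divfK.
by rewrite (inj_eq (mulfI hl)).
Qed.

Lemma Wf_scale (K : finFieldType) d (F : {set 'rV[K]_d}) x (l : K) :
  l != 0 -> Wf F (l *: x) = Wf F x.
Proof.
move=> hl; rewrite /Wf.
under eq_bigr do rewrite mcnt_scale //.
rewrite [RHS](reindex_inj (h := fun t => t / l)) //=.
by apply: mulIf; rewrite invr_eq0.
Qed.

Lemma CS (T : finType) (A : {set T}) (a : T -> rat) :
  (\sum_(x in A) a x) ^+ 2 <= #|A|%:R * \sum_(x in A) a x ^+ 2.
Proof.
set N : rat := #|A|%:R; set s := \sum_(x in A) a x; set s2 := \sum_(x in A) a x ^+ 2.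
have h : 0 <= \sum_(x in A) (N * a x - s) ^+ 2.
  by apply: sumr_ge0 => x _; apply: sqr_ge0.
have e : \sum_(x in A) (N * a x - s) ^+ 2 = N * (N * s2 - s ^+ 2).
  transitivity (\sum_(x in A) (N ^+ 2 * a x ^+ 2 - (2 * N * s) * a x + s ^+ 2)).
    by apply: eq_bigr => x _; ring.
  rewrite big_split /= sumrB -!mulr_sumr sumr_const -/s -/s2 -mulr_natl -/N; ring.
have hN : 0 <= N by rewrite /N ler0n.
move: h; rewrite e; have [N0|Nn] := eqVneq N 0.
  move/eqP: N0; rewrite /N pnatr_eq0 cards_eq0 => /eqP A0 _.
  by rewrite /s /s2 A0 !big_set0 cards0 mul0r expr2 mul0r.
have Np : 0 < N by rewrite lt_def Nn hN.
by rewrite pmulr_rge0 // subr_ge0.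
Qed.

Lemma dot_delta (K : finFieldType) d (w : 'rV[K]_d) j :
  dotF (delta_mx 0 j) w = w 0 j.
Proof.
rewrite /dotF (bigD1 j) //= mxE !eqxx mul1r big1 ?addr0 // => i ne.
by rewrite mxE eqxx (negbTE ne) mul0r.
Qed.

Lemma dot_delta_r (K : finFieldType) d (w : 'rV[K]_d) j :
  dotF w (delta_mx 0 j) = w 0 j.
Proof.
rewrite /dotF (bigD1 j) //= mxE !eqxx mulr1 big1 ?addr0 // => i ne.
by rewrite mxE eqxx (negbTE ne) mulr0.
Qed.

Lemma par_diff (K : finFieldType) n (y y' : 'rV[K]_n.+1) :
  y \in paraboloid K n -> y' \in paraboloid K n -> y != y' ->
  exists i : 'I_n, (y - y') 0 (widen_ord (leqnSn n) i) != 0.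
Proof.
rewrite !inE => /eqP hy /eqP hy' ne.
apply/existsP; apply: contraR ne; rewrite negb_exists => /forallP hall.
have eqi : forall i : 'I_n, y 0 (widen_ord (leqnSn n) i) = y' 0 (widen_ord (leqnSn n) i).
  by move=> i; move: (hall i); rewrite negbK !mxE subr_eq0 => /eqP.
apply/eqP/rowP => j.
have [->|nej] := eqVneq j ord_max.
  by rewrite -hy -hy'; apply: eq_bigr => i _; rewrite eqi.
have jn : (j < n)%N.
  by rewrite ltn_neqAle -ltnS ltn_ord andbT; apply: contra nej => /eqP h; apply/eqP/val_inj.
by have := eqi (Ordinal jn); congr (_ = _); congr (_ _ _); apply: val_inj.
Qed.

Lemma exists_v (K : finFieldType) n (y y' : 'rV[K]_n.+1) :
  y \in paraboloid K n -> y' \in paraboloid K n -> y != y' ->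
  exists v : 'rV[K]_n.+1, dotF v (y - y') = 1 /\ v 0 ord_max = 0.
Proof.
move=> hy hy' ne; have [i hi] := par_diff hy hy' ne.
exists (((y - y') 0 (widen_ord (leqnSn n) i))^-1 *: delta_mx 0 (widen_ord (leqnSn n) i)).
split; first by rewrite dotZl dot_delta mulVf.
rewrite !mxE eqxx /=.
have -> : (ord_max == widen_ord (leqnSn n) i) = false.
  by apply/negbTE; apply/eqP => /(congr1 val) /= h; move: (ltn_ord i); rewrite -h ltnn.
by rewrite mulr0.
Qed.

Definition G0 (K : finFieldType) n : {set 'rV[K]_n.+1} :=
  [set x : 'rV[K]_n.+1 | x 0 ord_max == 0].

Lemma sum_all (K : finFieldType) n (F : {set 'rV[K]_n.+1}) :
  F \subset paraboloid K n ->
  \sum_(x in [set: 'rV[K]_n.+1]) Wf F x =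
    (#|K| ^ n.+1)%:R * (#|K|%:R ^+ 2 - #|K|%:R) * #|F|%:R.
Proof.
move=> /subsetP hF; rewrite Wsum_G; last first.
  move=> y y' hy hy' ne; have [v [hv _]] := exists_v (hF _ hy) (hF _ hy') ne.
  by exists v; split => // x k _; rewrite in_setT.
by rewrite cardsT card_mx mul1n.
Qed.

Lemma sum_G0 (K : finFieldType) n (F : {set 'rV[K]_n.+1}) :
  F \subset paraboloid K n ->
  \sum_(x in G0 K n) Wf F x =
    #|G0 K n|%:R * (#|K|%:R ^+ 2 - #|K|%:R) * #|F|%:R.
Proof.
move=> /subsetP hF; rewrite Wsum_G //.
move=> y y' hy hy' ne; have [v [hv v0]] := exists_v (hF _ hy) (hF _ hy') ne.
exists v; split => // x k; rewrite !inE !mxE v0 mulr0 addr0 //.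
Qed.

Lemma G0card (K : finFieldType) n :
  (#|G0 K n|%:R : rat) * #|K|%:R = (#|K| ^ n.+1)%:R.
Proof.
have h := @level_card K n.+1 [set: 'rV[K]_n.+1] (delta_mx 0 ord_max) (delta_mx 0 ord_max).
rewrite cardsT card_mx mul1n in h; rewrite -h ?dot_delta ?mxE ?eqxx //; last first.
  by move=> x k _; rewrite in_setT.
rewrite mulrC; congr (_ * _).
rewrite -sumr_const big_mkcond [RHS]big_mkcond /=; apply: eq_bigr => x _.
by rewrite !inE dot_delta_r; case: eqP.
Qed.

Lemma sum_sub (T : finType) (S S' : {set T}) (f : T -> rat) :
  S \subset S' -> (forall x, 0 <= f x) ->
  \sum_(x in S) f x <= \sum_(x in S') f x.
Proof.
move=> h f0; rewrite [X in _ <= X](big_setID S) /= (setIidPr h) lerDl.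
by apply: sumr_ge0.
Qed.

Definition P1 (K : finFieldType) n : {set 'rV[K]_n.+1} :=
  [set x in paraboloid K n | x 0 ord_max != 0].

Lemma scale_inj (K : finFieldType) n :
  {in setX [set~ (0 : K)] (P1 K n) &,
     injective (fun p : K * 'rV[K]_n.+1 => p.1 *: p.2)}.
Proof.
move=> [l x] [l' x']; rewrite !in_setX !in_setC1 !inE /=.
move=> /andP [hl /andP [/eqP ex xd]] /andP [hl' /andP [/eqP ex' xd']] e.
have ej : forall j, l * x 0 j = l' * x' 0 j.
  by move=> j; have := congr1 (fun M : 'rV_n.+1 => M 0 j) e; rewrite !mxE.
have h2 : l ^+ 2 * x 0 ord_max = l' ^+ 2 * x' 0 ord_max.
  rewrite -ex -ex' !mulr_sumr; apply: eq_bigr => i _.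
  by rewrite -!exprMn ej.
have ll : l = l'.
  apply: (@mulIf _ (l' * x' 0 ord_max)); first by rewrite mulf_neq0.
  transitivity (l ^+ 2 * x 0 ord_max); first by rewrite -ej mulrA -expr2.
  by rewrite h2 mulrA -expr2.
move: e; rewrite /= -ll => /(scalerI hl) ->.
by rewrite ll.
Qed.

Lemma sum_P1 (K : finFieldType) n (F : {set 'rV[K]_n.+1}) :
  (#|K|%:R - 1) * \sum_(x in P1 K n) Wf F x <=
  \sum_(x in [set: 'rV[K]_n.+1]) Wf F x.
Proof.
have e1 : \sum_(l in [set~ (0 : K)]) \sum_(x in P1 K n) Wf F (l *: x) =
          (#|K|%:R - 1) * \sum_(x in P1 K n) Wf F x.
  transitivity (\sum_(l in [set~ (0 : K)]) \sum_(x in P1 K n) Wf F x).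
    by apply: eq_bigr => l; rewrite in_setC1 => hl; apply: eq_bigr => x _; rewrite Wf_scale.
  rewrite sumr_const cardsC1 -[_ *+ #|K|.-1]mulr_natl; congr (_ * _).
  by rewrite -subn1 natrB // ltnW // card_finNzRing_gt1.
rewrite -e1 pair_big /=.
rewrite (eq_bigl (fun p => p \in setX [set~ (0 : K)] (P1 K n))); last first.
  by move=> [l x]; rewrite in_setX.
rewrite -(big_imset (fun xi => Wf F xi) (@scale_inj K n)) /=.
apply: sum_sub; first exact: subsetT.
by move=> x; apply: Wf_ge0.
Qed.

Lemma Q_gt1 (K : finFieldType) : 1 < (#|K|%:R : rat).
Proof. by rewrite ltr1n card_finNzRing_gt1. Qed.

Lemma sum_par (K : finFieldType) n (F : {set 'rV[K]_n.+1}) :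
  F \subset paraboloid K n ->
  \sum_(x in paraboloid K n) Wf F x <= 2 * (#|K|%:R ^+ n.+2) * #|F|%:R.
Proof.
move=> hF.
set Q : rat := #|K|%:R; set M : rat := #|F|%:R.
have Q1 : 1 < Q := Q_gt1 K.
have M0 : 0 <= M by rewrite /M ler0n.
rewrite (big_setID (G0 K n)) /=.
have -> : \sum_(i in paraboloid K n :\: G0 K n) Wf F i = \sum_(i in P1 K n) Wf F i.
  by apply: eq_bigl => x; rewrite !inE andbC.
have b1 : \sum_(i in P1 K n) Wf F i <= Q ^+ n.+2 * M.
  have h := sum_P1 F; rewrite sum_all // natrX -/Q -/M in h.
  have Qm : 0 < Q - 1 by rewrite subr_gt0.
  rewrite -(ler_pM2l Qm).
  have -> : (Q - 1) * (Q ^+ n.+2 * M) = Q ^+ n.+1 * (Q ^+ 2 - Q) * M.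
    by rewrite !exprS; ring.
  exact: h.
have b2 : \sum_(i in paraboloid K n :&: G0 K n) Wf F i <= Q ^+ n.+2 * M.
  apply: (le_trans (sum_sub (subsetIr _ _) (@Wf_ge0 K n.+1 F))).
  rewrite sum_G0 // -/Q -/M.
  have hG := G0card K n; rewrite natrX -/Q in hG.
  set g := (#|G0 K n|%:R : rat) in hG *.
  have -> : g * (Q ^+ 2 - Q) * M = (g * Q) * (Q - 1) * M by ring.
  rewrite hG !exprS; rewrite -subr_ge0.
  have -> : Q * (Q * Q ^+ n) * M - Q * Q ^+ n * (Q - 1) * M = Q * Q ^+ n * M by ring.
  by rewrite mulr_ge0 // mulr_ge0 // ?exprn_ge0 // ltW // (lt_trans ltr01 Q1).
have -> : 2 * Q ^+ n.+2 * M = Q ^+ n.+2 * M + Q ^+ n.+2 * M by ring.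
by rewrite addrC lerD.
Qed.

Lemma final_arith (a X B Q : rat) : 0 <= a -> 0 < B -> 4 * B <= X ->
  a * X ^+ 2 <= 2 * X * (Q * B) -> 1 / 2 * Q <= Q - a.
Proof.
move=> a0 B0 hX h.
have X0 : 0 < X by apply: lt_le_trans hX; rewrite mulr_gt0.
have h1 : a * X <= 2 * (Q * B).
  rewrite -(ler_pM2l X0).
  have -> : X * (a * X) = a * X ^+ 2 by ring.
  have -> : X * (2 * (Q * B)) = 2 * X * (Q * B) by ring.
  exact: h.
have h2 : a * (4 * B) <= a * X by rewrite ler_wpM2l.
have h3 : a * 2 <= Q.
  have h4 := le_trans h2 h1.
  rewrite -(ler_pM2r B0) -(ler_pM2l (_ : 0 < 2 :> rat)) //.
  have -> : 2 * (a * 2 * B) = a * (4 * B) by ring.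
  have -> : 2 * (Q * B) = 2 * (Q * B) by [].
  exact: h4.
rewrite -subr_ge0.
have -> : Q - a - 1 / 2 * Q = (Q - a * 2) / 2 by field.
by rewrite divr_ge0 // subr_ge0.
Qed.

Theorem theorem3p6 (n : nat) : (1 <= n)%N ->
  exists C c : rat, 1 < C /\ 0 < c < 1 /\
    forall (K : finFieldType) (E F : {set 'rV[K]_n.+1}),
      2%N \notin [pchar K] ->
      E \subset paraboloid K n -> F \subset paraboloid K n ->
      C * ((#|K| ^ n.+1)%N)%:R <= ((#|E| * #|F|)%N)%:R ->
      c * (#|K|)%:R <= (#|dotset E F|)%:R.
Proof.
move=> _; exists 4, (1 / 2); split; first by [].
split; first by [].
move=> K E F _ hE hF hC.
set Q : rat := #|K|%:R; set N : rat := #|E|%:R; set M : rat := #|F|%:R.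
set Pi := dotset E F.
pose D t := \sum_(x in E) (Q * mcnt F x t - M).
have N0 : 0 <= N by rewrite /N ler0n.
have hup : \sum_(t : K) D t ^+ 2 <= N * (2 * Q ^+ n.+2 * M).
  apply: le_trans (_ : \sum_(t : K) N * \sum_(x in E) (Q * mcnt F x t - M) ^+ 2 <= _).
    by apply: ler_sum => t _; apply: CS.
  rewrite -mulr_sumr ler_wpM2l // exchange_big /=.
  apply: le_trans (sum_par hF).
  exact: (sum_sub hE (@Wf_ge0 K n.+1 F)).
have hz : forall t, t \in ~: Pi -> D t = - (N * M).
  move=> t; rewrite inE => tP.
  rewrite /D (eq_bigr (fun _ => - M)); last first.
    move=> x hx; rewrite /mcnt big1 ?mulr0 ?sub0r // => y hy.
    case: eqP => // et; exfalso; move/negP: tP; apply.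
    by rewrite -et; apply/imset2P; exists x y.
  by rewrite sumr_const mulNrn -mulr_natl.
have hlow : (#|~: Pi|%:R : rat) * (N * M) ^+ 2 <= \sum_(t : K) D t ^+ 2.
  apply: le_trans (_ : \sum_(t in ~: Pi) D t ^+ 2 <= _).
    rewrite (eq_bigr (fun _ => (N * M) ^+ 2)); last by move=> t ht; rewrite hz // sqrrN.
    by rewrite sumr_const mulr_natl.
  rewrite [X in _ <= X](bigID (mem (~: Pi))) /= lerDl.
  by apply: sumr_ge0 => t _; apply: sqr_ge0.
have hc : (#|~: Pi|%:R : rat) = Q - #|Pi|%:R.
  by rewrite /Q -(cardsC Pi) natrD addrC addKr.
rewrite hc in hlow.
suff h : 1 / 2 * Q <= Q - (Q - #|Pi|%:R).
  by move: h; rewrite opprB addrC subrK.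
apply: (@final_arith (Q - #|Pi|%:R) (N * M) (Q ^+ n.+1) Q).
- by rewrite subr_ge0 /Q ler_nat -(cardsC Pi) leq_addr.
- by rewrite exprn_gt0 // (lt_trans ltr01 (Q_gt1 K)).
- by move: hC; rewrite natrM natrX.
- apply: le_trans hlow _; apply: le_trans hup _.
  rewrite le_eqVlt; apply/orP; left; apply/eqP; rewrite exprS; ring.
Qed.
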